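(* Let $0\le k<\infty$, let $M$ be a $C^k$ manifold, $\mathbb F\in\{\mathbb R,\mathbb C\}$, and let $f,g\in C^k(M,\mathbb F)$ with $f(x)=g(x)=0$ for some $x\in M$. Then there exists $h\in C^k(M,\mathbb F)$ with $h(x)=0$ such that both $f^{4k+4}$ and $g^{4k+4}$ are divisible by $h$ in $C^k(M,\mathbb F)$ (i.e. $f^{4k+4}=hv$ and $g^{4k+4}=hw$ for some $v,w\in C^k(M,\mathbb F)$).
   Context: Manifolds are Hausdorff and second countable. *)

(* Defs.v *)
From HB Require Import structures.
From mathcomp Require Import all_boot all_order all_algebra.
From mathcomp Require Import all_classical all_reals topology normedtype derive.
From mathcomp Require Import complex.
Set Implicit Arguments.
Unset Strict Implicit.
Unset Printing Implicit Defensive.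
Import Order.TTheory GRing.Theory Num.Theory.
Import numFieldNormedType.Exports.
Local Open Scope classical_set_scope.
Local Open Scope ring_scope.

Section CkDefs.
Variable R : realType.

Definition evec (n : nat) (i : 'I_n) : 'rV[R]_n := delta_mx 0 i.

Section CkOn.
Variables (n : nat) (V : normedModType R).

Fixpoint Ck_on (k : nat) (U : set 'rV[R]_n) (f : 'rV[R]_n -> V) : Prop :=
  (forall x, U x -> {for x, continuous f}) /\
  match k with
  | 0%N => True
  | k'.+1 => (forall (i : 'I_n) x, U x -> derivable f x (evec i)) /\
             (forall i : 'I_n, Ck_on k' U (fun x => 'D_(evec i) f x))
  end.
End CkOn.

Record chart (T : topologicalType) := Chart {
  ch_dim : nat;
  ch_dom : set T;
  ch_map : T -> 'rV[R]_ch_dim;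
  ch_inv : 'rV[R]_ch_dim -> T }.
Arguments ch_dom {T} c.
Arguments ch_map {T} c _.
Arguments ch_inv {T} c _.

Definition ch_img (T : topologicalType) (c : chart T) : set 'rV[R]_(ch_dim c) :=
  ch_map c @` ch_dom c.
Arguments ch_img {T} c.

Definition is_chart (T : topologicalType) (c : chart T) : Prop :=
  [/\ open (ch_dom c), open (ch_img c),
      (forall x, ch_dom c x -> ch_inv c (ch_map c x) = x),
      (forall y, ch_img c y -> ch_map c (ch_inv c y) = y) &
      ({within ch_dom c, continuous (ch_map c)} /\
       {within ch_img c, continuous (ch_inv c)})].

Definition Ck_atlas (k : nat) (T : topologicalType) (A : set (chart T)) : Prop :=
  [/\ (forall c, A c -> is_chart c),
      (forall x : T, exists2 c, A c & ch_dom c x) &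
      (forall c1 c2, A c1 -> A c2 ->
         Ck_on k (ch_map c1 @` (ch_dom c1 `&` ch_dom c2))
                 (fun y => ch_map c2 (ch_inv c1 y)))].

Definition Ck_fun (k : nat) (T : topologicalType) (A : set (chart T))
  (V : normedModType R) (f : T -> V) : Prop :=
  forall c, A c -> Ck_on k (ch_img c) (fun y => f (ch_inv c y)).

Definition Ck_funC (k : nat) (T : topologicalType) (A : set (chart T))
  (f : T -> R[i]) : Prop :=
  Ck_fun k A (fun x => complex.Re (f x) : R) /\
  Ck_fun k A (fun x => complex.Im (f x) : R).

End CkDefs.

(* Main.v *)
Require Import Defs.
From HB Require Import structures.
From mathcomp Require Import all_boot all_order all_algebra.
From mathcomp Require Import all_classical all_reals topology normedtype derive.
From mathcomp Require Import complex.
From mathcomp Require Import ring lra zify landau.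
Import Order.TTheory GRing.Theory Num.Theory.
Import numFieldNormedType.Exports.
Local Open Scope classical_set_scope.
Local Open Scope ring_scope.
Section Main.
Variable R : realType.

Inductive PO (m : nat) : nat -> ('rV[R]_m -> R) -> Prop :=
| PO_zero D : PO m D (fun _ => 0)
| PO_cst c : PO m 0%N (fun _ => c)
| PO_crd j : PO m 1%N (fun p => p 0 j)
| PO_add D P Q : PO m D P -> PO m D Q -> PO m D (fun p => P p + Q p)
| PO_mul a b P Q : PO m a P -> PO m b Q -> PO m (a + b)%N (fun p => P p * Q p)
| PO_wk D P : PO m D.+1 P -> PO m D P.
Arguments PO {m}.
Arguments PO_zero {m}.
Arguments PO_cst {m}.
Arguments PO_crd {m}.
Arguments PO_add {m D P Q}.
Arguments PO_mul {m a b P Q}.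
Arguments PO_wk {m D P}.

Lemma PO_wkn m D D' P : PO D P -> (D' <= D)%N -> @PO m D' P.
Proof.
move=> h le; rewrite -(subnKC le) in h.
elim: (D - D')%N h => [|e IH] h; first by rewrite addn0 in h.
by apply: IH; apply: PO_wk; rewrite addnS in h.
Qed.

Arguments PO_wkn {m D D' P}.

Lemma PO_diff m D P : @PO m D P -> forall p, differentiable P p.
Proof.
elim=> {D P} [D|c|j|D P Q _ IP _ IQ|a b P Q _ IP _ IQ|D P _ IP] p.
- exact: differentiable_cst.
- exact: differentiable_cst.
- exact: differentiable_coord.
- exact: (differentiableD (IP p) (IQ p)).
- exact: (differentiableM (IP p) (IQ p)).
- exact: IP.
Qed.

Arguments PO_diff {m D P}.

Lemma D_coord m (i : 'I_m) (v p : 'rV[R]_m) : 'D_v (fun q : 'rV[R]_m => q 0 i) p = v 0 i.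
Proof.
have := @derive_mx R _ 1 m id p v (@derivable_id R _ p v).
rewrite derive_id => /(congr1 (fun M : 'M_(1,m) => M 0 i)); rewrite mxE => ->.
by [].
Qed.

Lemma PO_der m D P : @PO m D P -> forall v, exists Q, @PO m D.-1 Q /\
  forall p, 'D_v P p = Q p.
Proof.
move=> hP0; elim: hP0 => {D P} [D|c|j|D P Q hP IP hQ IQ|a b P Q hP IP hQ IQ|D P hP IP] v.
- by exists (fun _ => 0); split; [exact: PO_zero|move=> p; exact: derive_cst].
- by exists (fun _ => 0); split; [exact: PO_zero|move=> p; exact: derive_cst].
- by exists (fun _ => v 0 j); split; [exact: PO_cst|move=> p; exact: D_coord].
- have [P1 [h1 e1]] := IP v; have [Q1 [h2 e2]] := IQ v.
  exists (fun p => P1 p + Q1 p); split; first exact: PO_add.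
  move=> p; have -> : (fun p => P p + Q p) = P + Q by [].
  by rewrite (deriveD (diff_derivable (v:=v) (PO_diff hP p)) (diff_derivable (v:=v) (PO_diff hQ p))) e1 e2.
- have [P1 [h1 e1]] := IP v; have [Q1 [h2 e2]] := IQ v.
  exists (fun p => P p * Q1 p + Q p * P1 p); split.
    apply: PO_add; apply: PO_wkn.
    + exact: PO_mul hP h2.
    + lia.
    + exact: PO_mul hQ h1.
    + lia.
  move=> p; have -> : (fun p => P p * Q p) = P * Q by [].
  by rewrite (deriveM (diff_derivable (v:=v) (PO_diff hP p)) (diff_derivable (v:=v) (PO_diff hQ p))) e1 e2.
- have [P1 [h1 e1]] := IP v; exists P1; split => //.
  apply: (PO_wkn h1); lia.
Qed.

Arguments PO_der {m D P}.

Lemma norm_coord m (p : 'rV[R]_m) j : `|p 0 j| <= `|p|.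
Proof.
rewrite [X in _ <= X]/Num.Def.normr /= mx_normrE.
by apply: le_trans (le_bigmax _ _ (0, j)).
Qed.

Lemma PO_bound m D P : @PO m D P -> exists C, 0 <= C /\
  forall p, `|p| <= 1 -> `|P p| <= C * `|p| ^+ D.
Proof.
elim=> {D P} [D|c|j|D P Q hP [C1 [C10 IP]] hQ [C2 [C20 IQ]]|a b P Q hP [C1 [C10 IP]] hQ [C2 [C20 IQ]]|D P hP [C [C0 IP]]].
- by exists 0; split => // p _; rewrite normr0 mul0r.
- by exists `|c|; split => // p _; rewrite expr0 mulr1.
- by exists 1; split => // p _; rewrite expr1 mul1r norm_coord.
- exists (C1 + C2); split; first exact: addr_ge0.
  move=> p hp; apply: (le_trans (ler_normD _ _)); rewrite mulrDl.
  by apply: lerD; [exact: IP|exact: IQ].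
- exists (C1 * C2); split; first exact: mulr_ge0.
  move=> p hp; rewrite normrM exprD mulrACA.
  by apply: ler_pM; rewrite ?normr_ge0 ?IP ?IQ.
- exists C; split => // p hp; apply: (le_trans (IP p hp)).
  rewrite exprS; apply: ler_wpM2l => //.
  by rewrite ler_piMl ?exprn_ge0 ?normr_ge0.
Qed.


Fixpoint Dk (m k : nat) (F : 'rV[R]_m -> R) : Prop :=
  (forall p, {for p, continuous F}) /\
  match k with
  | 0%N => True
  | k'.+1 => (forall p, differentiable F p) /\
             (forall j : 'I_m, Dk m k' (fun p => 'D_(evec R j) F p))
  end.
Arguments Dk {m}.

Arguments PO_bound {m D P}.

Lemma PO_Dk m k D P : @PO m D P -> Dk k P.
Proof.
elim: k D P => [|k IH] D P hP.
  by split => // p; apply: differentiable_continuous; exact: PO_diff hP p.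
split; first by move=> p; apply: differentiable_continuous; exact: PO_diff hP p.
split; first exact: PO_diff hP.
move=> j; have [Q [hQ eQ]] := PO_der hP (evec R j).
have -> : (fun p => 'D_(evec R j) P p) = Q by apply: funext.
exact: IH hQ.
Qed.


Lemma open_near n (U : set 'rV[R]_n) y : open U -> U y -> \forall z \near y, U z.
Proof. by move=> hU Uy; apply: open_nbhs_nbhs; split. Qed.

Arguments PO_Dk {m} k {D P}.

Lemma Ck_S n k (U : set 'rV[R]_n) (f : 'rV[R]_n -> R) :
  Ck_on k.+1 U f -> Ck_on k U f.
Proof.
elim: k f => [|k IH] f [hc [hd hD]]; first by split.
by split => //; split => // i; apply: IH; exact: hD.
Qed.

Lemma Ck_le n k k' (U : set 'rV[R]_n) (f : 'rV[R]_n -> R) :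
  (k' <= k)%N -> Ck_on k U f -> Ck_on k' U f.
Proof.
move=> le; rewrite -(subnKC le); elim: (k - k')%N => [|e IH]; first by rewrite addn0.
by rewrite addnS => /Ck_S; exact: IH.
Qed.

Lemma near_eqU n (U : set 'rV[R]_n) (f g : 'rV[R]_n -> R) y : open U ->
  (forall y, U y -> f y = g y) -> U y -> {near y, f =1 g}.
Proof.
move=> hU efg Uy; near=> z; rewrite efg //; near: z; exact: open_near.
Unshelve. all: by end_near. Qed.
Arguments near_eqU {n U f g y}.

Lemma Ck_eq n k (U : set 'rV[R]_n) (f g : 'rV[R]_n -> R) : open U ->
  (forall y, U y -> f y = g y) -> Ck_on k U f -> Ck_on k U g.
Proof.
move=> hU; elim: k f g => [|k IH] f g efg [hc hk].
  split => // y Uy.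
  apply: cvg_trans (near_eq_cvg (near_eqU hU efg Uy)) _.
  by rewrite -(efg y Uy); exact: hc.
have [hd hD] := hk.
split.
  move=> y Uy.
  apply: cvg_trans (near_eq_cvg (near_eqU hU efg Uy)) _.
  by rewrite -(efg y Uy); exact: hc.
split.
  move=> i y Uy; apply: near_eq_derivable (hd i y Uy).
  exact: (near_eqU hU efg Uy).
move=> i; apply: (IH _ _ _ (hD i)) => y Uy.
apply: near_eq_derive.
exact: (near_eqU hU efg Uy).
Qed.

Lemma Ck_cst n k (U : set 'rV[R]_n) (c : R) : Ck_on k U (fun _ => c).
Proof.
elim: k c => [|k IH] c.
  by split => // y _; exact: cst_continuous.
split; first by move=> y _; exact: cst_continuous.
split; first by move=> i y _; exact: derivable_cst.
move=> i.
have -> : (fun x => 'D_(evec R i) (fun _ : 'rV[R]_n => c) x) = (fun _ => 0).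
  by apply: funext => x; exact: derive_cst.
exact: IH.
Qed.


Lemma sum_cont n m (G : 'I_m -> 'rV[R]_n -> 'rV[R]_m) y (s : seq 'I_m) :
  (forall j, {for y, continuous (G j)}) ->
  {for y, continuous (fun z => \sum_(j <- s) G j z)}.
Proof.
move=> hG; elim: s => [|j s IH].
  have -> : (fun z => \sum_(j <- [::]) G j z) = (fun _ => 0) by apply: funext => z; rewrite big_nil.
  exact: cst_continuous.
have -> : (fun z => \sum_(i <- j :: s) G i z) = G j + (fun z => \sum_(i <- s) G i z).
  by apply: funext => z; rewrite big_cons.
exact: continuousD.
Qed.

Lemma row_cont n m (F : 'I_m -> 'rV[R]_n -> R) y :
  (forall j, {for y, continuous (F j)}) ->
  {for y, continuous (fun z => \row_j F j z : 'rV[R]_m)}.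
Proof.
move=> hF.
have -> : (fun z => \row_j F j z : 'rV[R]_m) = (fun z => \sum_(j < m) F j z *: 'e_j).
  apply: funext => z; rewrite [LHS]row_sum_delta; apply: eq_bigr => j _.
  by rewrite mxE.
apply: sum_cont => j; exact: continuousZr_tmp.
Qed.

Lemma D1E (V : normedModType R) (f : V -> R) (y v : V) :
  'D_v f y = 'D_1 (fun h : R => f (h *: v + y)) 0.
Proof.
rewrite /derive; set g1 := fun h => h^-1 *: _; set g2 := fun h => h^-1 *: _.
suff -> : g1 = g2 by [].
by rewrite funeqE /g1 /g2 => h /=; rewrite addr0 scale0r add0r [_%:A]mulr1.
Qed.

Lemma D1E_mx (V : normedModType R) m (f : V -> 'rV[R]_m) (y v : V) :
  'D_v f y = 'D_1 (fun h : R => f (h *: v + y)) 0.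
Proof.
rewrite /derive; set g1 := fun h => h^-1 *: _; set g2 := fun h => h^-1 *: _.
suff -> : g1 = g2 by [].
by rewrite funeqE /g1 /g2 => h /=; rewrite addr0 scale0r add0r [_%:A]mulr1.
Qed.

Lemma chain m n (Phi : 'rV[R]_m -> R) (F : 'I_m -> 'rV[R]_n -> R) y v :
  differentiable Phi (\row_j F j y) -> (forall j, derivable (F j) y v) ->
  derivable (fun z => Phi (\row_j F j z)) y v /\
  'D_v (fun z => Phi (\row_j F j z)) y =
    \sum_j 'D_v (F j) y * 'D_(evec R j) Phi (\row_j F j y).
Proof.
move=> dPhi dF.
pose g := fun z => \row_j F j z : 'rV[R]_m.
have dg : derivable g y v.
  apply/derivable_mxP => i j.
  have -> : (fun x => g x i j) = F j by apply: funext => x; rewrite /g mxE.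
  exact: dF.
pose c := fun h : R => g (h *: v + y).
have dc : differentiable c 0 by apply/derivable1_diffP; exact: (derivable1P g y v).1 dg.
have c0 : c 0 = g y by rewrite /c scale0r add0r.
have dPc : differentiable (Phi \o c) 0.
  by apply: differentiable_comp => //; rewrite c0.
split.
  by apply/derivable1P; apply/derivable1_diffP; exact: dPc.
rewrite D1E.
change ('D_1 (Phi \o c) 0 = \sum_j 'D_v (F j) y * 'D_(evec R j) Phi (g y)).
rewrite deriveE // diff_comp /=; last by rewrite c0.
rewrite -(@deriveE _ _ _ c 0 1 dc) c0.
have -> : 'D_1 c 0 = 'D_v g y by rewrite /c -D1E_mx.
rewrite (derive_mx dg).
set w := \matrix_(i, j) _.
rewrite [in LHS](row_sum_delta w) linear_sum /=; apply: eq_bigr => j _.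
rewrite linearZ /= -deriveE //.
rewrite /w mxE.
have -> : (fun t => g t 0 j) = F j by apply: funext => x; rewrite /g mxE.
by [].
exact: dc.
Qed.


Arguments chain {m n Phi F y v}.

Definition Comp k := forall m n (U : set 'rV[R]_n) (Phi : 'rV[R]_m -> R)
  (F : 'I_m -> 'rV[R]_n -> R), open U -> Dk k Phi ->
  (forall j, Ck_on k U (F j)) -> Ck_on k U (fun y => Phi (\row_j F j y)).

Definition pmul : 'rV[R]_2 -> R := fun p => p 0 ord0 * p 0 ord_max.
Definition padd : 'rV[R]_2 -> R := fun p => p 0 ord0 + p 0 ord_max.

Lemma Ck_mul k n (U : set 'rV[R]_n) (a b : 'rV[R]_n -> R) : Comp k -> open U ->
  Ck_on k U a -> Ck_on k U b -> Ck_on k U (fun y => a y * b y).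
Proof.
move=> hC hU ha hb.
pose F := fun j : 'I_2 => if val j == 0%N then a else b.
have -> : (fun y => a y * b y) = (fun y => pmul (\row_j F j y)).
  by apply: funext => y; rewrite /pmul !mxE.
apply: hC => //; first exact: (PO_Dk k (PO_mul (@PO_crd 2 ord0) (@PO_crd 2 ord_max))).
by move=> j; rewrite /F; case: ifP.
Qed.

Lemma Ck_add k n (U : set 'rV[R]_n) (a b : 'rV[R]_n -> R) : Comp k -> open U ->
  Ck_on k U a -> Ck_on k U b -> Ck_on k U (fun y => a y + b y).
Proof.
move=> hC hU ha hb.
pose F := fun j : 'I_2 => if val j == 0%N then a else b.
have -> : (fun y => a y + b y) = (fun y => padd (\row_j F j y)).
  by apply: funext => y; rewrite /padd !mxE.
apply: hC => //.
  have := PO_Dk k (PO_add (PO_wk (PO_mul (@PO_crd 2 ord0) (PO_cst 1)))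
     (PO_wk (PO_mul (@PO_crd 2 ord_max) (PO_cst 1)))).
  have -> : (fun p : 'rV[R]_2 => p 0 ord0 * 1 + p 0 ord_max * 1) = padd.
    by apply: funext => p; rewrite !mulr1.
  by [].
by move=> j; rewrite /F; case: ifP.
Qed.

Lemma Ck_sum k n m (U : set 'rV[R]_n) (H : 'I_m -> 'rV[R]_n -> R) (s : seq 'I_m) :
  Comp k -> open U -> (forall j, Ck_on k U (H j)) ->
  Ck_on k U (fun y => \sum_(j <- s) H j y).
Proof.
move=> hC hU hH; elim: s => [|j s IH].
  have -> : (fun y => \sum_(j <- [::]) H j y) = (fun _ => 0) by apply: funext => z; rewrite big_nil.
  exact: Ck_cst.
have -> : (fun y => \sum_(i <- j :: s) H i y) = (fun y => H j y + \sum_(i <- s) H i y).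
  by apply: funext => z; rewrite big_cons.
exact: Ck_add.
Qed.

Lemma comp_all k : Comp k.
Proof.
elim: k => [|k IH] m n U Phi F hU hPhi hF.
  split => // y Uy.
  apply: (continuous_comp (f := fun z => \row_j F j z)).
    by apply: row_cont => j; exact: (hF j).1.
  exact: hPhi.1.
have [hcPhi [hdPhi hDPhi]] := hPhi.
split.
  move=> y Uy; apply: (continuous_comp (f := fun z => \row_j F j z)).
    by apply: row_cont => j; exact: (hF j).1.
  exact: hcPhi.
split.
  move=> i y Uy.
  exact: (chain (hdPhi _) (fun j => (hF j).2.1 i y Uy)).1.
move=> i.
apply: (@Ck_eq _ _ _ (fun y => \sum_j 'D_(evec R i) (F j) y * 'D_(evec R j) Phi (\row_j F j y))) => //.
  move=> y Uy.
  by rewrite (chain (hdPhi _) (fun j => (hF j).2.1 i y Uy)).2.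
apply: Ck_sum => // j; apply: Ck_mul => //.
  exact: ((hF j).2.2 i).
apply: (IH _ _ _ (fun p => 'D_(evec R j) Phi p)) => //.
  exact: hDPhi.
by move=> l; apply: Ck_S; exact: hF.
Qed.


Definition rr m (p : 'rV[R]_m) : R := \sum_j p 0 j ^+ 2.
Arguments rr {m}.

Lemma PO_rr m : @PO m 2 (@rr m).
Proof.
rewrite /rr; elim: (index_enum _) => [|j s IH].
  have -> : (fun p : 'rV[R]_m => \sum_(j <- [::]) p 0 j ^+ 2) = (fun _ => 0).
    by apply: funext => p; rewrite big_nil.
  exact: PO_zero.
have -> : (fun p : 'rV[R]_m => \sum_(i <- j :: s) p 0 i ^+ 2) =
  (fun p => p 0 j * p 0 j + \sum_(i <- s) p 0 i ^+ 2).
  by apply: funext => p; rewrite big_cons expr2.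
exact: PO_add (PO_mul (PO_crd j) (PO_crd j)) IH.
Qed.

Arguments PO_rr {m}.

Lemma rr_ge0 m (p : 'rV[R]_m) : 0 <= rr p.
Proof. by apply: sumr_ge0 => j _; exact: sqr_ge0. Qed.

Arguments rr_ge0 {m}.

Lemma rr_norm {m} (p : 'rV[R]_m) : `|p| ^+ 2 <= rr p.
Proof.
have h : `|p| <= Num.sqrt (rr p).
  rewrite [X in X <= _]/Num.Def.normr /= mx_normrE.
  apply: bigmax_le; first exact: sqrtr_ge0.
  move=> [i j] _ /=; rewrite (ord1 i) -sqrtr_sqr ler_sqrt; last exact: rr_ge0.
  rewrite /rr (bigD1 j) //= lerDl; apply: sumr_ge0 => l _; exact: sqr_ge0.
rewrite -[X in _ <= X](sqr_sqrtr (rr_ge0 p)).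
by rewrite lerXn2r // ?nnegrE ?normr_ge0 ?sqrtr_ge0.
Qed.


Definition RatF m (P : 'rV[R]_m -> R) (m0 : nat) : 'rV[R]_m -> R :=
  fun p => P p / rr p ^+ m0.
Arguments RatF {m}.

Definition Rat m d (Phi : 'rV[R]_m -> R) :=
  exists m0 P, @PO m (d + 2 * m0)%N P /\ Phi = RatF P m0.
Arguments Rat {m}.

Lemma rr0 m (p : 'rV[R]_m) : rr p = 0 -> p = 0.
Proof.
move=> h; have := rr_norm p; rewrite h => hp.
apply/normr0_eq0/eqP.
have : `|p| ^+ 2 == 0 by rewrite eq_le hp exprn_ge0 ?normr_ge0.
by rewrite expf_eq0.
Qed.

Arguments rr0 {m p}.

Lemma Rat_bound m d Phi : @Rat m d Phi -> (0 < d)%N -> exists C, 0 < C /\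
  forall p, `|p| <= 1 -> `|Phi p| <= C * `|p| ^+ d.
Proof.
move=> [m0 [P [hP ->]]] d0; have [C [C0 hC]] := PO_bound hP.
exists (C + 1); split; first by rewrite ltr_pwDr.
move=> p p1; rewrite /RatF.
have hCp : 0 <= (C + 1) * `|p| ^+ d by rewrite mulr_ge0 ?exprn_ge0 ?addr_ge0.
have [r0|rn0] := eqVneq (rr p) 0.
  have := hC p p1; rewrite (rr0 r0) normr0 expr0n addn_eq0 (negbTE (lt0n_neq0 d0)) /= mulr0.
  by rewrite normr_le0 => /eqP ->; rewrite mul0r normr0 mulr_ge0 ?exprn_ge0 ?addr_ge0.
have rp : 0 < rr p ^+ m0 by rewrite exprn_gt0 // lt0r rn0 rr_ge0.
rewrite normrM normfV (ger0_norm (ltW rp)) ler_pdivrMr //.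
apply: (le_trans (hC p p1)); rewrite exprD exprM mulrA.
apply: ler_pM; rewrite ?mulr_ge0 ?exprn_ge0 ?normr_ge0 //.
  by apply: ler_wpM2r; rewrite ?exprn_ge0 ?normr_ge0 // lerDl.
apply: lerXn2r; rewrite ?nnegrE ?exprn_ge0 ?normr_ge0 ?rr_ge0 //.
exact: rr_norm.
Qed.

Arguments Rat_bound {m d Phi}.

Lemma Rat0 m d Phi : @Rat m d Phi -> (0 < d)%N -> Phi 0 = 0.
Proof.
move=> hR d0; have [C [C0 hC]] := Rat_bound hR d0.
have := hC 0; rewrite normr0 ler01 expr0n (negbTE (lt0n_neq0 d0)) mulr0 => /(_ isT).
by rewrite normr_le0 => /eqP.
Qed.

Arguments Rat0 {m d Phi}.

Lemma fexpE (V : normedModType R) (f : V -> R) n x : (f ^+ n) x = f x ^+ n.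
Proof. by elim: n => [|n IH]; rewrite ?expr0 // !exprS -IH. Qed.

Lemma RatF_eq m (P : 'rV[R]_m -> R) m0 :
  RatF P m0 = P * (fun q => ((@rr m ^+ m0) q)^-1).
Proof. by apply: funext => q; rewrite /RatF -fexpE. Qed.

Lemma Rat_diff_nz m D (P : 'rV[R]_m -> R) m0 p : PO D P -> rr p != 0 ->
  differentiable (RatF P m0) p.
Proof.
move=> hP rn0; rewrite RatF_eq; apply: differentiableM; first exact: PO_diff hP p.
case: m0 => [|k].
  have -> : (fun q => ((@rr m ^+ 0) q)^-1) = cst 1.
    by apply: funext => q; rewrite fexpE expr0 invr1.
  exact: differentiable_cst.
apply: (differentiableV (differentiableX k (PO_diff PO_rr p))).
by rewrite fexpE expf_neq0.
Qed.

Lemma pow_le_self (x : R) d : 0 <= x -> x <= 1 -> (0 < d)%N -> x ^+ d <= x.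
Proof.
move=> x0 x1; case: d => // d _; rewrite exprS.
by rewrite ler_piMr // exprn_ile1.
Qed.

Lemma cont0_bound (V : normedModType R) (f : V -> R) C d : 0 < C -> (0 < d)%N ->
  f 0 = 0 -> (forall q, `|q| <= 1 -> `|f q| <= C * `|q| ^+ d) -> {for 0, continuous f}.
Proof.
move=> C0 d0 f0 hC; apply/cvgrPdist_le => e e0; rewrite f0.
near=> q; rewrite sub0r normrN.
have q1 : `|q| <= 1 by near: q; apply: nbhs0_le.
apply: (le_trans (hC q q1)).
have qe : `|q| <= e / C by near: q; apply: nbhs0_le; exact: divr_gt0.
have h1 : C * `|q| ^+ d <= C * `|q|.
  by rewrite ler_pM2l // pow_le_self.
apply: (le_trans h1).
by rewrite mulrC -ler_pdivlMr.
Unshelve. all: by end_near. Qed.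

Lemma Rat_cont m d Phi : @Rat m d Phi -> (0 < d)%N -> forall p, {for p, continuous Phi}.
Proof.
move=> hR d0 p; have hR' := hR; move: hR' => [m0 [P [hP eP]]].
have [r0|rn0] := eqVneq (rr p) 0; last first.
  by apply: differentiable_continuous; rewrite eP; exact: Rat_diff_nz hP rn0.
rewrite (rr0 r0); have [C [C0 hC]] := Rat_bound hR d0.
exact: (@cont0_bound _ Phi C d C0 d0 (Rat0 hR d0) hC).
Qed.

Lemma diff0_bound (V : normedModType R) (f : V -> R) C d : 0 < C -> (1 < d)%N ->
  f 0 = 0 -> (forall q, `|q| <= 1 -> `|f q| <= C * `|q| ^+ d) ->
  differentiable f 0 /\ forall v, 'D_v f 0 = 0.
Proof.
move=> C0 d1 f0 hC.
have L : f \o shift 0 = cst (f 0) + \0 +o_ 0 id.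
  apply/eqaddoP => e e0; near=> q.
  change (`|f (q + 0) - (f 0 + 0)| <= e * `|q|).
  rewrite addr0 f0 addr0 subr0.
  have q1 : `|q| <= 1 by near: q; apply: nbhs0_le.
  have qe : `|q| <= e / C by near: q; apply: nbhs0_le; exact: divr_gt0.
  apply: (le_trans (hC q q1)).
  case: d d1 {hC} => // -[|d] // _.
  rewrite exprSr mulrA; apply: ler_wpM2r; first exact: normr_ge0.
  have h1 : C * `|q| ^+ d.+1 <= C * `|q|.
    by rewrite ler_pM2l // pow_le_self.
  apply: (le_trans h1).
  by rewrite mulrC -ler_pdivlMr.
have dU : 'd f 0 = \0 :> (V -> R).
  by apply/diff_unique => //; exact: cst_continuous.
have df : differentiable f 0.
  by apply/diff_locallyP; rewrite dU; split => //; exact: cst_continuous.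
split => // v; rewrite deriveE // dU.
Unshelve. all: by end_near. Qed.

Arguments Rat_diff_nz {m D P m0 p}.

Lemma Rat_der m d Phi : @Rat m d Phi -> (1 < d)%N ->
  (forall p, differentiable Phi p) /\
  forall j, exists Psi, Rat d.-1 Psi /\ forall p, 'D_(evec R j) Phi p = Psi p.
Proof.
move=> hR d1; have hR' := hR; move: hR' => [m0 [P [hP eP]]].
have [C [C0 hC]] := Rat_bound hR (ltnW d1).
have [df0 dD0] := @diff0_bound _ Phi C d C0 d1 (Rat0 hR (ltnW d1)) hC.
split.
  move=> p; have [r0|rn0] := eqVneq (rr p) 0; first by rewrite (rr0 r0).
  rewrite eP; exact: Rat_diff_nz hP rn0.
move=> j.
have [Q [hQ eQ]] := PO_der hP (evec R j).
have [S [hS eS]] := PO_der (@PO_rr m) (evec R j).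
pose N := fun p => Q p * rr p + (- m0%:R) * (P p * S p).
have hN : PO (d.-1 + 2 * m0.+1) N.
  apply: PO_add.
  - apply: (PO_wkn (PO_mul hQ PO_rr)); lia.
  - apply: (PO_wkn (PO_mul (PO_cst _) (PO_mul hP hS))); lia.
exists (RatF N m0.+1); split; first by exists m0.+1, N.
move=> p; have [r0|rn0] := eqVneq (rr p) 0.
  rewrite (rr0 r0) dD0; symmetry; apply: (Rat0 (d := d.-1)); last lia.
  by exists m0.+1, N.
have dP := diff_derivable (v := evec R j) (PO_diff hP p).
have dr := diff_derivable (v := evec R j) (PO_diff (@PO_rr m) p).
have rmn0 : (@rr m ^+ m0) p != 0 by rewrite fexpE expf_neq0.
rewrite eP [in LHS]RatF_eq deriveM //; last exact: derivableV rmn0 (derivableX dr).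
rewrite deriveV; last exact: derivableX.
rewrite (deriveX m0 dr) eQ eS !fexpE /RatF /N.
have sc : forall a b : R, a *: b = a * b by [].
rewrite !sc.
case: m0 {hP eP N hN rmn0 hQ} => [|k].
  rewrite !expr0 invr1 expr1 !mul0r mulr0 oppr0 !mul0r addr0 mul1r.
  by field.
rewrite /= !exprS.
set t := rr p; set u := t ^+ k; set c := (k.+1)%:R.
have u0 : u != 0 by rewrite expf_neq0.
by field; rewrite ?u0 ?rn0 //=.
by rewrite fexpE expf_neq0.
Qed.

Arguments Rat_der {m d Phi}.
Arguments Rat_cont {m d Phi}.

Lemma Rat_Dk k m d Phi : @Rat m d Phi -> (k < d)%N -> Dk k Phi.
Proof.
elim: k d Phi => [|k IH] d Phi hR kd.
  by split => //; apply: Rat_cont hR _.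
have d1 : (1 < d)%N by lia.
have [hd hD] := Rat_der hR d1.
split; first by apply: Rat_cont hR _; lia.
split => // j; have [Psi [hPsi ePsi]] := hD j.
have -> : (fun p => 'D_(evec R j) Phi p) = Psi by apply: funext.
apply: IH hPsi _; lia.
Qed.

Lemma PO_crdX m (j : 'I_m) n : PO n (fun p : 'rV[R]_m => p 0 j ^+ n).
Proof.
elim: n => [|n IH].
  have -> : (fun p : 'rV[R]_m => p 0 j ^+ 0) = (fun _ => 1) by apply: funext => p; rewrite expr0.
  exact: PO_cst.
have -> : (fun p : 'rV[R]_m => p 0 j ^+ n.+1) = (fun p => p 0 j * p 0 j ^+ n).
  by apply: funext => p; rewrite exprS.
exact: (PO_mul (PO_crd j) IH).
Qed.

Lemma ReM (x y : R[i]) : complex.Re (x * y) = complex.Re x * complex.Re y - complex.Im x * complex.Im y.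
Proof. by case: x => a b; case: y => c d. Qed.
Lemma ImM (x y : R[i]) : complex.Im (x * y) = complex.Re x * complex.Im y + complex.Im x * complex.Re y.
Proof. by case: x => a b; case: y => c d. Qed.
Lemma ceta (x : R[i]) : x = (complex.Re x +i* complex.Im x)%C. Proof. by case: x. Qed.

Lemma PO_cpow m (a b : 'I_m) n :
  PO n (fun p : 'rV[R]_m => complex.Re ((p 0 a +i* p 0 b)%C ^+ n)) /\
  PO n (fun p : 'rV[R]_m => complex.Im ((p 0 a +i* p 0 b)%C ^+ n)).
Proof.
elim: n => [|n [IHr IHi]].
  split.
    have -> : (fun p : 'rV[R]_m => complex.Re ((p 0 a +i* p 0 b)%C ^+ 0)) = (fun _ => 1).
      by apply: funext => p; rewrite expr0.
    exact: PO_cst.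
  have -> : (fun p : 'rV[R]_m => complex.Im ((p 0 a +i* p 0 b)%C ^+ 0)) = (fun _ => 0).
    by apply: funext => p; rewrite expr0.
  exact: PO_zero.
split.
  have -> : (fun p : 'rV[R]_m => complex.Re ((p 0 a +i* p 0 b)%C ^+ n.+1)) =
    (fun p => complex.Re ((p 0 a +i* p 0 b)%C ^+ n) * p 0 a +
       (-1) * (complex.Im ((p 0 a +i* p 0 b)%C ^+ n) * p 0 b)).
    by apply: funext => p; rewrite exprSr ReM /= mulN1r.
  apply: PO_add.
    by apply: (PO_wkn (PO_mul IHr (PO_crd a))); lia.
  by apply: (PO_wkn (PO_mul (PO_cst (-1)) (PO_mul IHi (PO_crd b)))); lia.
have -> : (fun p : 'rV[R]_m => complex.Im ((p 0 a +i* p 0 b)%C ^+ n.+1)) =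
  (fun p => complex.Re ((p 0 a +i* p 0 b)%C ^+ n) * p 0 b +
     complex.Im ((p 0 a +i* p 0 b)%C ^+ n) * p 0 a).
  by apply: funext => p; rewrite exprSr ImM.
apply: (PO_wkn (PO_add (PO_mul IHr (PO_crd b)) (PO_mul IHi (PO_crd a)))); lia.
Qed.


Lemma Ck_fun_comp (T : topologicalType) k m (A : set (chart R T)) (Phi : 'rV[R]_m -> R) (G : 'I_m -> T -> R) :
  (forall c, A c -> is_chart c) -> Dk k Phi -> (forall j, Ck_fun k A (G j)) ->
  Ck_fun k A (fun z => Phi (\row_j G j z)).
Proof.
move=> hch hPhi hG c Ac; have [_ himg _ _ _] := hch c Ac.
exact: (@comp_all k _ _ _ _ _ himg hPhi (fun j => hG j c Ac)).
Qed.

Lemma Ck_fun_cst (T : topologicalType) k (A : set (chart R T)) (a : R) : Ck_fun k A (fun _ : T => a).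
Proof. by move=> c Ac; exact: Ck_cst. Qed.

Lemma cdiv (z : R[i]) (s : R) : (s = 0 -> z = 0) ->
  z = ((s +i* 0)%C * ((complex.Re z / s) +i* (complex.Im z / s))%C).
Proof.
have [->|sn0] := eqVneq s 0.
  by move=> /(_ erefl) ->; rewrite /= !mul0r.
move=> _; case: z => a b /=.
by congr (_ +i* _)%C; field.
Qed.

End Main.

Arguments rr {R m}.
Arguments RatF {R m}.
Arguments Dk {R m}.
Arguments rr0 {R m p}.
Arguments PO_rr {R m}.
Arguments PO_Dk {R m} k {D P}.
Arguments PO_wkn {R m D D' P}.
Arguments PO_crdX {R m}.
Arguments PO_cpow {R m}.
Arguments Ck_fun_comp {R T k m A Phi G}.
Arguments Rat_Dk {R} k {m} d {Phi}.

Theorem lemma2p4 (R : realType) (k : nat) (T : topologicalType)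
  (A : set (chart R T)) :
  hausdorff_space T -> @second_countable T -> Ck_atlas k A ->
  (forall (f g : T -> R) (x : T),
     Ck_fun k A f -> Ck_fun k A g -> f x = 0 -> g x = 0 ->
     exists h : T -> R, [/\ Ck_fun k A h, h x = 0,
       (exists2 v : T -> R, Ck_fun k A v &
          forall y, f y ^+ (4 * k + 4)%N = h y * v y) &
       (exists2 w : T -> R, Ck_fun k A w &
          forall y, g y ^+ (4 * k + 4)%N = h y * w y)]) /\
  (forall (f g : T -> R[i]) (x : T),
     Ck_funC k A f -> Ck_funC k A g -> f x = 0 -> g x = 0 ->
     exists h : T -> R[i], [/\ Ck_funC k A h, h x = 0,
       (exists2 v : T -> R[i], Ck_funC k A v &
          forall y, f y ^+ (4 * k + 4)%N = h y * v y) &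
       (exists2 w : T -> R[i], Ck_funC k A w &
          forall y, g y ^+ (4 * k + 4)%N = h y * w y)]).
Proof.
move=> _ _ hA; have [hch _ _] := hA.
set N := (4 * k + 4)%N.
have N0 : (0 < N)%N by rewrite /N; lia.
split.
- move=> f g x hf hg fx gx.
  pose G := fun (j : 'I_2) (z : T) => if val j == 0%N then f z else g z.
  have hG : forall j, Ck_fun k A (G j) by move=> j; rewrite /G; case: (val j == 0%N).
  pose row z := \row_j G j z : 'rV[R]_2.
  have hV : forall (j : 'I_2), Dk k (RatF (fun p : 'rV[R]_2 => p 0 j ^+ N) 1).
    move=> j; apply: (Rat_Dk k (N - 2)%N); last by rewrite /N; lia.
    exists 1%N, (fun p => p 0 j ^+ N); split => //.
    by apply: (PO_wkn (PO_crdX j N)); rewrite /N; lia.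
  have key : forall (j : 'I_2) y, G j y ^+ N = rr (row y) * RatF (fun p => p 0 j ^+ N) 1 (row y).
    move=> j y; rewrite /RatF expr1 mxE.
    have [r0|rn0] := eqVneq (rr (row y)) 0.
      have := congr1 (fun M : 'rV[R]_2 => M 0 j) (rr0 r0); rewrite mxE => ->.
      by rewrite r0 mul0r mxE expr0n (negbTE (lt0n_neq0 N0)).
    by rewrite mulrC divfK.
  exists (fun z => rr (row z)); split.
  + exact: (Ck_fun_comp hch (PO_Dk k PO_rr) hG).
  + by rewrite /rr big_ord_recl big_ord1 !mxE /G /= fx gx expr0n /= addr0.
  + exists (fun z => RatF (fun p : 'rV[R]_2 => p 0 ord0 ^+ N) 1 (row z)).
      exact: (Ck_fun_comp hch (hV ord0) hG).
    by move=> y; exact: (key ord0 y).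
  + exists (fun z => RatF (fun p : 'rV[R]_2 => p 0 ord_max ^+ N) 1 (row z)).
      exact: (Ck_fun_comp hch (hV ord_max) hG).
    by move=> y; exact: (key ord_max y).
- move=> f g x [hfr hfi] [hgr hgi] fx gx.
  pose G := fun (j : 'I_4) (z : T) =>
    if val j == 0%N then complex.Re (f z) else if val j == 1%N then complex.Im (f z)
    else if val j == 2%N then complex.Re (g z) else complex.Im (g z).
  have hG : forall j, Ck_fun k A (G j).
    move=> j; rewrite /G; case: (val j == 0%N) => //; case: (val j == 1%N) => //.
    by case: (val j == 2%N).
  pose row z := \row_j G j z : 'rV[R]_4.
  pose i0 : 'I_4 := @Ordinal 4 0 isT.
  pose i1 : 'I_4 := @Ordinal 4 1 isT.
  pose i2 : 'I_4 := @Ordinal 4 2 isT.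
  pose i3 : 'I_4 := @Ordinal 4 3 isT.
  have hV : forall (a b : 'I_4),
      Dk k (RatF (fun p : 'rV[R]_4 => complex.Re ((p 0 a +i* p 0 b)%C ^+ N)) 1) /\
      Dk k (RatF (fun p : 'rV[R]_4 => complex.Im ((p 0 a +i* p 0 b)%C ^+ N)) 1).
    move=> a b; have [hr hi] := PO_cpow (R:=R) a b N; split.
      apply: (Rat_Dk k (N - 2)%N); last by rewrite /N; lia.
      exists 1%N, (fun p : 'rV[R]_4 => complex.Re ((p 0 a +i* p 0 b)%C ^+ N)); split => //.
      by apply: (PO_wkn hr); rewrite /N; lia.
    apply: (Rat_Dk k (N - 2)%N); last by rewrite /N; lia.
    exists 1%N, (fun p : 'rV[R]_4 => complex.Im ((p 0 a +i* p 0 b)%C ^+ N)); split => //.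
    by apply: (PO_wkn hi); rewrite /N; lia.
  have key : forall (a b : 'I_4) (u : T -> R[i]) y,
      (forall z, G a z = complex.Re (u z)) -> (forall z, G b z = complex.Im (u z)) ->
      u y ^+ N = (rr (row y) +i* 0)%C *
        (RatF (fun p : 'rV[R]_4 => complex.Re ((p 0 a +i* p 0 b)%C ^+ N)) 1 (row y)
         +i* RatF (fun p : 'rV[R]_4 => complex.Im ((p 0 a +i* p 0 b)%C ^+ N)) 1 (row y))%C.
    move=> a b u y ea eb.
    rewrite /RatF expr1 !mxE ea eb -ceta.
    apply: cdiv => r0.
    have := congr1 (fun M : 'rV[R]_4 => M 0 a) (rr0 r0); rewrite !mxE ea => ea0.
    have := congr1 (fun M : 'rV[R]_4 => M 0 b) (rr0 r0); rewrite !mxE eb => eb0.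
    by rewrite (@ceta _ (u y)) ea0 eb0 expr0n (negbTE (lt0n_neq0 N0)).
  have Gx : forall j, G j x = 0.
    by move=> j; rewrite /G fx gx; case: (val j == 0%N); case: (val j == 1%N); case: (val j == 2%N).
  exists (fun z => (rr (row z) +i* 0)%C); split.
  + split; first exact: (Ck_fun_comp hch (PO_Dk k PO_rr) hG).
    exact: Ck_fun_cst.
  + have -> : rr (row x) = 0.
      by rewrite /rr big1 // => j _; rewrite mxE Gx expr0n.
    by [].
  + exists (fun z => (RatF (fun p : 'rV[R]_4 => complex.Re ((p 0 i0 +i* p 0 i1)%C ^+ N)) 1 (row z)
         +i* RatF (fun p : 'rV[R]_4 => complex.Im ((p 0 i0 +i* p 0 i1)%C ^+ N)) 1 (row z))%C).
      split; [exact: (Ck_fun_comp hch (hV i0 i1).1 hG)|exact: (Ck_fun_comp hch (hV i0 i1).2 hG)].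
    by move=> y; apply: key.
  + exists (fun z => (RatF (fun p : 'rV[R]_4 => complex.Re ((p 0 i2 +i* p 0 i3)%C ^+ N)) 1 (row z)
         +i* RatF (fun p : 'rV[R]_4 => complex.Im ((p 0 i2 +i* p 0 i3)%C ^+ N)) 1 (row z))%C).
      split; [exact: (Ck_fun_comp hch (hV i2 i3).1 hG)|exact: (Ck_fun_comp hch (hV i2 i3).2 hG)].
    by move=> y; apply: key.
Qed.
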